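(* Let $p$ be a stochastic choice function on $X$. The following are equivalent: (i) $p$ is rationalized by an MSC $\langle Q,\nu\rangle$ such that for every $M\in\mathcal N$ the matrix $Q(M)$ is fully comparable and reversible on $M$; (ii) $p$ is positive and satisfies independence of irrelevant alternatives, i.e. $p(i,\{i,j\})\,p(j,M)=p(j,\{i,j\})\,p(i,M)$ for all $M\in\mathcal N$ and $i,j\in M$; (iii) $p$ is rationalized by an MSC $\langle Q,\nu\rangle$ for which there is a function $u:X\to(0,\infty)$ such that for all $M\in\mathcal N$ and distinct $i,j\in M$, $q_{ij}(M)>0$ and $\dfrac{q_{ij}(M)}{q_{ji}(M)}=\dfrac{u(j)}{u(i)}$.
   Context: $X$ is a finite set of alternatives; a menu is a nonempty subset of $X$, and $\mathcal N$ denotes the set of all menus. A stochastic choice function is a map $p:X\times\mathcal N\to[0,1]$ with $\sum_{i\in M}p(i,M)=1$ and $p(i,M)=0$ for $i\notin M$; $p(\cdot,M)$ denotes the row vector $(p(i,M))_{i\in M}$. $p$ is positive if $p(i,M)>0$ for all $M\in\mathcal N$ and $i\in M$. An MSC (Markov stochastic choice model) $\langle Q,\nu\rangle$ consists of, for every menu $M$, a matrix $Q(M)=(q_{ij}(M))_{i,j\in M}$ with nonnegative entries and a probability distribution $\nu_M$ on $M$, such that for all $M\in\mathcal N$ and distinct $i,j\in M$: (A1) $q_{ii}(M)=1-\sum_{k\neq i}q_{ik}(M)>0$; (A2) if $q_{ij}(\{i,j\})=0$ then $q_{ji}(\{i,j\})>0$; (A3) $q_{ij}(\{i,j\})\,q_{ji}(M)=q_{ji}(\{i,j\})\,q_{ij}(M)$.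 For a right stochastic matrix $Q$ on $M$ and a distribution $\nu$ on $M$ define $\rho(\nu,Q)=\lim_{\alpha\to0^+}\sum_{t\ge0}\alpha(1-\alpha)^t\nu Q^t$ (the limit exists and satisfies $\rho(\nu,Q)(I-Q)=0$). $p$ is rationalized by the MSC $\langle Q,\nu\rangle$ if $p(\cdot,M)=\rho(\nu_M,Q(M))$ for every $M\in\mathcal N$. $Q(M)$ is fully comparable if $q_{ij}(M)>0$ for all distinct $i,j\in M$. $Q(M)$ is reversible on $M$ if, with $\rho=\rho(\nu_M,Q(M))$, $q_{ji}(M)\rho_j=\rho_i\,q_{ij}(M)$ for all $i,j\in M$. *)

(* Defs.v *)
From HB Require Import structures.
From mathcomp Require Import all_boot all_order all_algebra.
From mathcomp Require Import all_classical all_reals all_analysis.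
Set Implicit Arguments. Unset Strict Implicit. Unset Printing Implicit Defensive.
Import Order.TTheory GRing.Theory Num.Theory.
Import numFieldNormedType.Exports.
Local Open Scope ring_scope.


Section MSC.
Variables (R : realType) (X : finType).

(* A menu is a nonempty M : {set X}.  A stochastic choice function is
   p : X -> {set X} -> R, where p i M stands for p(i,M). *)
Definition stochastic_choice (p : X -> {set X} -> R) : Prop :=
  forall M : {set X}, M != finset.set0 ->
    (forall i, 0 <= p i M /\ p i M <= 1) /\
    (\sum_(i in M) p i M = 1) /\
    (forall i, i \notin M -> p i M = 0).

Definition positive_scf (p : X -> {set X} -> R) : Prop :=
  forall M : {set X}, M != finset.set0 -> forall i, i \in M -> 0 < p i M.

Definition IIA (p : X -> {set X} -> R) : Prop :=
  forall M : {set X}, M != finset.set0 -> forall i j, i \in M -> j \in M ->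
    p i [set i; j]%SET * p j M = p j [set i; j]%SET * p i M.

(* Q M i j stands for q_ij(M) (only its entries with i, j in M matter);
   nu M i stands for nu_M(i). *)

Fixpoint qpow (Q : X -> X -> R) (M : {set X}) (t : nat) : X -> X -> R :=
  match t with
  | 0 => fun i j => (i == j)%:R
  | t'.+1 => fun i j => \sum_(k in M) qpow Q M t' i k * Q k j
  end.

Definition distQ (nu : X -> R) (Q : X -> X -> R) (M : {set X}) (t : nat) (j : X) : R :=
  \sum_(i in M) nu i * qpow Q M t i j.

Definition abel (nu : X -> R) (Q : X -> X -> R) (M : {set X}) (a : R) (j : X) : R :=
  limn (fun n => \sum_(0 <= t < n) (a * (1 - a) ^+ t * distQ nu Q M t j)).

Definition rho (nu : X -> R) (Q : X -> X -> R) (M : {set X}) (j : X) : R :=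
  lim ((abel nu Q M a j @[a --> 0^'+])%classic).

Definition is_MSC (Q : {set X} -> X -> X -> R) (nu : {set X} -> X -> R) : Prop :=
  forall M : {set X}, M != finset.set0 ->
    (forall i j, i \in M -> j \in M -> 0 <= Q M i j) /\
    (forall i, i \in M -> 0 <= nu M i) /\ (\sum_(i in M) nu M i = 1) /\
    (forall i, i \in M ->
       Q M i i = 1 - \sum_(k in M | k != i) Q M i k /\ 0 < Q M i i) /\
    (forall i j, i \in M -> j \in M -> i != j ->
       (Q [set i; j]%SET i j = 0 -> 0 < Q [set i; j]%SET j i) /\
       Q [set i; j]%SET i j * Q M j i = Q [set i; j]%SET j i * Q M i j).

Definition rationalizes (p : X -> {set X} -> R)
    (Q : {set X} -> X -> X -> R) (nu : {set X} -> X -> R) : Prop :=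
  forall M : {set X}, M != finset.set0 -> forall i, i \in M -> p i M = rho (nu M) (Q M) M i.

Definition fully_comparable (Q : {set X} -> X -> X -> R) (M : {set X}) : Prop :=
  forall i j, i \in M -> j \in M -> i != j -> 0 < Q M i j.

Definition reversible (Q : {set X} -> X -> X -> R) (nu : {set X} -> X -> R)
    (M : {set X}) : Prop :=
  forall i j, i \in M -> j \in M ->
    Q M j i * rho (nu M) (Q M) M j = rho (nu M) (Q M) M i * Q M i j.

End MSC.

(* Main.v *)
Require Import Defs.
From HB Require Import structures.
From mathcomp Require Import all_boot all_order all_algebra.
From mathcomp Require Import all_classical all_reals all_analysis.
From mathcomp Require Import ring lra.
Import Order.TTheory GRing.Theory Num.Theory.
Import numFieldNormedType.Exports.
Local Open Scope ring_scope.

Section Key.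
Variables (R : realType) (X : finType) (M : {set X}) (Q : X -> X -> R) (nu : X -> R) (u : X -> R).
Hypotheses
 (Qge0 : forall i j, i \in M -> j \in M -> 0 < Q i j)
 (rows : forall i, i \in M -> \sum_(j in M) Q i j = 1)
 (nu0 : forall i, i \in M -> 0 <= nu i) (nu1 : \sum_(i in M) nu i = 1)
 (u0 : forall x, 0 < u x)
 (db : forall i j, i \in M -> j \in M -> u i * Q i j = u j * Q j i).

Local Notation s := (distQ nu Q M).

Lemma sS t j : s t.+1 j = \sum_(k in M) s t k * Q k j.
Proof.
rewrite /distQ /=. under eq_bigr do rewrite big_distrr.
rewrite exchange_big; apply: eq_bigr => k _.
rewrite big_distrl; apply: eq_bigr => i _. exact: mulrA.
Qed.

Lemma s0 j : j \in M -> s 0 j = nu j.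
Proof.
move=> jM; rewrite /distQ /= (bigD1 j) //= eqxx mulr1 big1 ?addr0 //.
by move=> i /andP[_ /negbTE ->]; rewrite mulr0.
Qed.

Lemma s_ge0 t j : j \in M -> 0 <= s t j.
Proof.
elim: t j => [|t IH] j jM; first by rewrite s0 // nu0.
rewrite sS; apply: sumr_ge0 => k kM; apply: mulr_ge0; first exact: IH.
exact/ltW/Qge0.
Qed.

Lemma s_sum t : \sum_(j in M) s t j = 1.
Proof.
elim: t => [|t IH]; first by rewrite -nu1; apply: eq_bigr => j; exact: s0.
under eq_bigr do rewrite sS. rewrite exchange_big /= -IH.
by apply: eq_bigr => k kM; rewrite -big_distrr /= rows // mulr1.
Qed.

Lemma s_le1 t j : j \in M -> s t j <= 1.
Proof.
move=> jM; rewrite -(s_sum t) (bigD1 j) //= lerDl.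
by apply: sumr_ge0 => k /andP[kM _]; apply: s_ge0.
Qed.

Lemma geom (a : R) n : \sum_(0 <= t < n) a * (1 - a) ^+ t = 1 - (1 - a) ^+ n.
Proof.
elim: n => [|n IH]; first by rewrite big_geq // expr0 subrr.
by rewrite big_nat_recr //= IH exprSr; ring.
Qed.

Section A.
Variable a : R.
Hypotheses (a0 : 0 < a) (a1 : a < 1).
Lemma ha : 0 <= 1 - a. Proof. by rewrite subr_ge0 ltW. Qed.
Lemma hat t : 0 <= a * (1 - a) ^+ t.
Proof. by apply: mulr_ge0; [exact: ltW|apply: exprn_ge0; exact: ha]. Qed.

Definition P n j := \sum_(0 <= t < n) (a * (1 - a) ^+ t * s t j).

Lemma P_le1 n j : j \in M -> P n j <= 1.
Proof.
move=> jM; apply: (le_trans (y := \sum_(0 <= t < n) a * (1 - a) ^+ t)).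
  apply: ler_sum => t _; rewrite -[X in _ <= X]mulr1; apply: ler_wpM2l.
    exact: hat.
  exact: s_le1.
rewrite geom lerBlDr lerDl; apply: exprn_ge0; exact: ha.
Qed.

Lemma P_ge0 n j : j \in M -> 0 <= P n j.
Proof.
move=> jM; apply: sumr_ge0 => t _; apply: mulr_ge0; last exact: s_ge0.
exact: hat.
Qed.

Lemma P_cvg j : j \in M -> (P n j @[n --> \oo] --> abel nu Q M a j)%classic.
Proof.
move=> jM.
have H : cvgn (P ^~ j).
  apply: nondecreasing_is_cvgn.
    move=> n m nm; rewrite /P (big_cat_nat (leq0n n) nm) /= lerDl.
    apply: sumr_ge0 => t _; apply: mulr_ge0; last exact: s_ge0.
    exact: hat.
  by exists 1 => _ [n _ <-]; apply: P_le1.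
exact: H.
Qed.

Lemma P_rec n j : j \in M ->
  P n.+1 j = a * nu j + (1 - a) * \sum_(k in M) P n k * Q k j.
Proof.
move=> jM; rewrite /P big_nat_recl // expr0 mulr1 s0 //; congr (_ + _).
under eq_bigr do rewrite sS big_distrr.
rewrite exchange_big /= big_distrr; apply: eq_bigr => k _.
rewrite big_distrl big_distrr; apply: eq_bigr => t _ /=.
rewrite exprSr; ring.
Qed.

Local Notation S := (abel nu Q M a).

Lemma S_rec j : j \in M ->
  S j = a * nu j + (1 - a) * \sum_(k in M) S k * Q k j.
Proof.
move=> jM.
have h1 : (P n.+1 j @[n --> \oo] --> S j)%classic.
  by rewrite (cvg_shiftS (fun n => P n j)); exact: P_cvg.
have h2 : (P n.+1 j @[n --> \oo] -->
   a * nu j + (1 - a) * \sum_(k in M) S k * Q k j)%classic.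
  under eq_cvg do rewrite P_rec //.
  apply: cvgD; first exact: cvg_cst.
  apply: cvgMl_tmp.
  apply: (cvg_big (op := +%R) (x0 := 0) (P := fun k => k \in M)).
    exact: add_continuous.
  move=> k kM; apply: cvgMr_tmp; exact: P_cvg.
exact: (cvg_unique _ h1 h2).
Qed.

Lemma S_ge0 j : j \in M -> 0 <= S j.
Proof.
move=> jM; rewrite /abel; apply: limr_ge.
  apply: (cvgP (abel nu Q M a j)); exact: P_cvg.
by apply: nearW => n; apply: P_ge0.
Qed.

Lemma S_sum : \sum_(j in M) S j = 1.
Proof.
have : \sum_(j in M) S j = a + (1 - a) * \sum_(j in M) S j.
  transitivity (\sum_(j in M) (a * nu j + (1 - a) * \sum_(k in M) S k * Q k j)).
    by apply: eq_bigr => j jM; exact: S_rec.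
  rewrite big_split /= -!big_distrr /= nu1 mulr1 exchange_big /=; congr (_ + _ * _).
  by apply: eq_bigr => k kM; rewrite -big_distrr /= rows // mulr1.
move=> h.
set x := \sum_(j in M) S j in h *.
have : a * (x - 1) = 0.
  transitivity (x - (a + (1 - a) * x)); first by ring.
  by rewrite -h subrr.
by move/eqP; rewrite mulf_eq0 gt_eqF //= subr_eq0 => /eqP.
Qed.

Lemma nu_le1 j : j \in M -> nu j <= 1.
Proof.
move=> jM; rewrite -nu1 (bigD1 j) //= lerDl.
by apply: sumr_ge0 => k /andP[kM _]; apply: nu0.
Qed.

Lemma S_bound j : j \in M ->
  `|S j - u j / \sum_(k in M) u k| * (1 - a) <=
   u j * (\sum_(k in M) \sum_(l in M) (u k * Q k l)^-1) * a.
Proof.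
move=> jM.
set Z := \sum_(k in M) u k.
set C := \sum_(k in M) \sum_(l in M) (u k * Q k l)^-1.
have uN k : u k != 0 by rewrite gt_eqF.
pose r k := S k / u k.
have Sr k : S k = u k * r k by rewrite /r mulrC divfK.
have g_id i : i \in M ->
    (1 - a) * (u i * \sum_(k in M) Q i k * (r i - r k)) = a * (nu i - S i).
  move=> iM.
  have e1 : u i * \sum_(k in M) Q i k * (r i - r k) = S i - \sum_(k in M) S k * Q k i.
    rewrite mulr_sumr.
    transitivity (\sum_(k in M) (Q i k * S i - S k * Q k i)).
      apply: eq_bigr => k kM.
      have d := db i k iM kM.
      transitivity (Q i k * (u i * r i) - (u i * Q i k) * r k); first by ring.
      by rewrite d -Sr; rewrite [u k * _ * _]mulrAC -Sr mulrC.
    by rewrite sumrB -big_distrl /= rows // mul1r.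
  rewrite e1 (S_rec i iM); ring.
have [kx kxM kxmax] := arg_maxP r jM.
have [kn knM knmin] := arg_minP r jM.
set D := r kx - r kn.
have Dge0 : 0 <= D by rewrite subr_ge0; apply: kxmax.
have gge : Q kx kn * D <= \sum_(k in M) Q kx k * (r kx - r k).
  rewrite (bigD1 kn) //= lerDl; apply: sumr_ge0 => k /andP[kM _].
  by apply: mulr_ge0; [exact/ltW/Qge0|rewrite subr_ge0; apply: kxmax].
have hD : (1 - a) * (u kx * (Q kx kn * D)) <= a.
  apply: (le_trans (y := a * (nu kx - S kx))); last first.
    rewrite -[X in _ <= X]mulr1; apply: ler_wpM2l; first exact: ltW.
    have := S_ge0 kx kxM; have := nu_le1 kx kxM; lra.
  rewrite -g_id //; apply: ler_wpM2l; first exact: ha.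
  by apply: ler_wpM2l; [exact/ltW/u0|].
have hC : (u kx * Q kx kn)^-1 <= C.
  rewrite /C (bigD1 kx) //= (bigD1 kn) //= -addrA lerDl.
  apply: addr_ge0.
    by apply: sumr_ge0 => l /andP[lM _]; rewrite invr_ge0 ltW // mulr_gt0 ?Qge0.
  apply: sumr_ge0 => k /andP[kM _]; apply: sumr_ge0 => l lM.
  by rewrite invr_ge0 ltW // mulr_gt0 ?Qge0.
have uQ : 0 < u kx * Q kx kn by rewrite mulr_gt0 // Qge0.
have hD2 : D * (1 - a) <= C * a.
  have e : D * (1 - a) = (u kx * Q kx kn)^-1 * ((1 - a) * (u kx * (Q kx kn * D))).
    by field; rewrite !gt_eqF ?Qge0.
  rewrite e; apply: (le_trans (y := (u kx * Q kx kn)^-1 * a)).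
    by apply: ler_wpM2l => //; rewrite invr_ge0 ltW.
  by apply: ler_wpM2r => //; exact: ltW.
have Z0 : 0 < Z.
  by rewrite /Z (bigD1 j) //= ltr_pwDl // sumr_ge0 // => k _; apply: ltW.
have SS := S_sum.
have hi : 1 <= Z * r kx.
  rewrite -SS /Z mulr_suml; apply: ler_sum => k kM; rewrite Sr.
  by apply: ler_wpM2l; [exact/ltW/u0|apply: kxmax].
have lo : Z * r kn <= 1.
  rewrite -SS /Z mulr_suml; apply: ler_sum => k kM; rewrite Sr.
  by apply: ler_wpM2l; [exact/ltW/u0|apply: knmin].
have hi' : Z^-1 <= r kx by rewrite -[Z^-1]mulr1 ler_pdivrMl.
have lo' : r kn <= Z^-1 by rewrite -[Z^-1]mulr1 ler_pdivlMl.
have rjx : r j <= r kx by apply: kxmax.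
have rjn : r kn <= r j by apply: knmin.
have hab : `|r j - Z^-1| <= D by rewrite ler_norml /D; apply/andP; split; lra.
have -> : S j - u j / Z = u j * (r j - Z^-1) by rewrite Sr mulrBr.
rewrite normrM gtr0_norm // -!mulrA; apply: ler_wpM2l; first exact: ltW.
apply: (le_trans (y := D * (1 - a))); last exact: hD2.
by rewrite ler_wpM2r //; exact: ha.
Qed.

End A.

Lemma rho_key j : j \in M -> rho nu Q M j = u j / \sum_(k in M) u k.
Proof.
move=> jM; rewrite /rho; apply: cvg_lim => //.
apply/cvgrPdist_le => eps eps0.
set K := u j * (\sum_(k in M) \sum_(l in M) (u k * Q k l)^-1).
have K0 : 0 <= K.
  apply: mulr_ge0; first exact/ltW/u0.
  apply: sumr_ge0 => k kM; apply: sumr_ge0 => l lM.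
  by rewrite invr_ge0 ltW // mulr_gt0 ?Qge0.
have e0 : 0 < eps / (2 * K + 1) by apply: divr_gt0 => //; lra.
near=> a.
have a0 : 0 < a by near: a; exact: nbhs_right_gt.
have a12 : a < 1 / 2 by near: a; apply: nbhs_right_lt; lra.
have ae : a < eps / (2 * K + 1) by near: a; apply: nbhs_right_lt.
have a1 : a < 1 by lra.
have hb := @S_bound a a0 a1 j jM.
rewrite distrC.
set x := `|_| in hb *.
have x0 : 0 <= x by apply: normr_ge0.
have h1 : 0 <= x * (1 - 2 * a) by apply: mulr_ge0 => //; lra.
have h3 : a * (2 * K + 1) < eps by rewrite -ltr_pdivlMr //; lra.
move: hb; rewrite -/K => hb. nra.
Unshelve. all: by end_near.
Qed.

End Key.

Section Main.
Variables (R : realType) (X : finType) (p : X -> {set X} -> R).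
Hypothesis hp : stochastic_choice p.

Lemma pair_n0 (i j : X) : [set i; j] != finset.set0.
Proof. by apply/set0Pn; exists i; rewrite !inE eqxx. Qed.

Lemma sum_but (M : {set X}) i : M != finset.set0 -> i \in M ->
  \sum_(k in M | k != i) p k M = 1 - p i M.
Proof.
move=> M0 iM; have [_ [h _]] := hp M M0.
by rewrite -h [X in _ = X - _](bigD1 i) //= addrAC subrr add0r.
Qed.

Lemma i_to_ii (Q : {set X} -> X -> X -> R) (nu : {set X} -> X -> R) :
  is_MSC Q nu -> rationalizes p Q nu ->
  (forall M : {set X}, M != finset.set0 -> fully_comparable Q M /\ reversible Q nu M) ->
  positive_scf p /\ IIA p.
Proof.
move=> hM hr hfr; split.
  move=> M M0 i iM.
  have [hge [hsum _]] := hp M M0.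
  have [hfc hrev] := hfr M M0.
  rewrite lt_def (hge i).1 andbT; apply/negP => /eqP pi0.
  have allz : forall j, j \in M -> p j M = 0.
    move=> j jM; case: (eqVneq i j) => [<- //|ij].
    have := hrev i j iM jM; rewrite -!hr // pi0 mul0r => /eqP.
    by rewrite mulf_eq0 gt_eqF ?hfc // 1?eq_sym //= => /eqP.
  by move: hsum; rewrite big1 // => /eqP; rewrite eq_sym oner_eq0.
move=> M M0 i j iM jM.
case: (eqVneq i j) => [<- //|ij].
set N := [set i; j].
have N0 : N != finset.set0 by apply: pair_n0.
have iN : i \in N by rewrite !inE eqxx.
have jN : j \in N by rewrite !inE eqxx orbT.
have [fN rN] := hfr N N0.
have [fM rM] := hfr M M0.
have hN := rN i j iN jN; rewrite -!hr // in hN.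
have hMM := rM i j iM jM; rewrite -!hr // in hMM.
have [_ [_ [_ [_ hA]]]] := hM M M0.
have [_ hA3] := hA i j iM jM ij.
have a0 : Q N i j != 0 by rewrite gt_eqF ?fN.
have d0 : Q M j i != 0 by rewrite gt_eqF ?fM // eq_sym.
apply: (mulIf (mulf_neq0 a0 d0)).
transitivity ((p i N * Q N i j) * (Q M j i * p j M)); first by ring.
rewrite -hN hMM.
transitivity (p j N * p i M * (Q N j i * Q M i j)); first by ring.
by rewrite -hA3.
Qed.

Lemma iii_to_ii (Q : {set X} -> X -> X -> R) (nu : {set X} -> X -> R) (u : X -> R) :
  is_MSC Q nu -> rationalizes p Q nu -> (forall x, 0 < u x) ->
  (forall M : {set X}, M != finset.set0 -> forall i j, i \in M -> j \in M -> i != j ->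
          0 < Q M i j /\ Q M i j / Q M j i = u j / u i) ->
  positive_scf p /\ IIA p.
Proof.
move=> hM hr u0 hu.
have key : forall M, M != finset.set0 -> forall j, j \in M ->
    p j M = u j / \sum_(k in M) u k.
  move=> M M0 j jM; rewrite hr //.
  have [hQ0 [hnu0 [hnu1 [hA1 _]]]] := hM M M0.
  have Qpos : forall i k, i \in M -> k \in M -> 0 < Q M i k.
    move=> i k iM kM; case: (eqVneq i k) => [<-|ik]; first exact: (hA1 i iM).2.
    exact: (hu M M0 i k iM kM ik).1.
  apply: rho_key => //.
  - move=> i iM; rewrite (bigD1 i) //= (hA1 i iM).1.
    by rewrite [X in _ + X](eq_bigr (fun k => Q M i k)) // subrK.
  - move=> i k iM kM; case: (eqVneq i k) => [<- //|ik].
    have := (hu M M0 i k iM kM ik).2; move/eqP.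
    have h1 : Q M k i != 0 by rewrite gt_eqF // Qpos.
    have h2 : u i != 0 by rewrite gt_eqF.
    by rewrite eqr_div // => /eqP h; rewrite mulrC h.
have Zpos : forall M, M != finset.set0 -> 0 < \sum_(k in M) u k.
  move=> M M0; have [j jM] := set0Pn _ M0.
  by rewrite (bigD1 j) //= ltr_pwDl // sumr_ge0 // => k _; apply: ltW.
split.
  by move=> M M0 i iM; rewrite key //; apply: divr_gt0 => //; exact: Zpos.
move=> M M0 i j iM jM.
have iN : i \in [set i; j] by rewrite !inE eqxx.
have jN : j \in [set i; j] by rewrite !inE eqxx orbT.
rewrite !key ?pair_n0 //; ring.
Qed.

Definition Qc (M : {set X}) (i j : X) : R :=
  if i == j then (1 + p i M) / 2 else p j M / 2.

Section Constr.
Hypotheses (hpos : positive_scf p) (hiia : IIA p).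

Lemma setT_n0 (i : X) : [set: X]%SET != finset.set0.
Proof. by apply/set0Pn; exists i; rewrite finset.in_setT. Qed.

Lemma ratio M i j : M != finset.set0 -> i \in M -> j \in M ->
  p j M * p i [set: X]%SET = p i M * p j [set: X]%SET.
Proof.
move=> M0 iM jM.
have iN : i \in [set i; j] by rewrite !inE eqxx.
have h1 := hiia M M0 i j iM jM.
have h2 := hiia _ (setT_n0 i) i j (finset.in_setT i) (finset.in_setT j).
have n0 : p i [set i; j] != 0 by rewrite gt_eqF // hpos ?pair_n0.
apply: (mulfI n0).
transitivity ((p i [set i; j] * p j M) * p i [set: X]%SET); first by ring.
rewrite h1.
transitivity (p i M * (p i [set i; j] * p j [set: X]%SET)); last by ring.
by rewrite h2; ring.
Qed.

Lemma Qc_pos M i j : M != finset.set0 -> i \in M -> j \in M -> 0 < Qc M i j.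
Proof.
move=> M0 iM jM; rewrite /Qc; case: eqP => _.
  have [hge _] := hp M M0; have := (hge i).1; move=> h.
  apply: divr_gt0 => //; apply: (lt_le_trans ltr01); rewrite lerDl //.
by apply: divr_gt0 => //; exact: hpos.
Qed.

Lemma Qc_rows M i : M != finset.set0 -> i \in M -> \sum_(j in M) Qc M i j = 1.
Proof.
move=> M0 iM; rewrite (bigD1 i) //= {1}/Qc eqxx.
rewrite (eq_bigr (fun k => p k M / 2)); last first.
  by move=> k /andP[_ ki]; rewrite /Qc eq_sym (negbTE ki).
by rewrite -big_distrl /= sum_but //; field.
Qed.

Lemma Qc_A1 M i : M != finset.set0 -> i \in M ->
  Qc M i i = 1 - \sum_(k in M | k != i) Qc M i k.
Proof.
move=> M0 iM; rewrite -(Qc_rows M i M0 iM) (bigD1 i) //=.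
by rewrite addrK.
Qed.

Lemma rho_c M j : M != finset.set0 -> j \in M -> rho (fun i => p i M) (Qc M) M j = p j M.
Proof.
move=> M0 jM.
have [hge [hsum _]] := hp M M0.
have uT : forall x, 0 < p x [set: X]%SET by move=> x; exact: (hpos _ (setT_n0 x) x (finset.in_setT x)).
rewrite (@rho_key R X M (Qc M) (fun i => p i M) (fun x => p x [set: X]%SET)) //.
- have Z0 : \sum_(k in M) p k [set: X]%SET != 0.
    rewrite gt_eqF // (bigD1 j) //= ltr_pwDl // sumr_ge0 // => k _; exact: ltW.
  rewrite -[RHS](mulfK Z0); congr (_ / _).
  rewrite mulr_sumr -[LHS]mul1r -hsum mulr_suml; apply: eq_bigr => k kM.
  by rewrite (ratio M k j M0 kM jM).
- by move=> i k iM kM; apply: Qc_pos.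
- by move=> i iM; apply: Qc_rows.
- by move=> i iM; exact: (hge i).1.
- move=> i k iM kM; rewrite /Qc; case: (eqVneq i k) => [-> //|ik].
  rewrite !mulrA; congr (_ / 2).
  by rewrite mulrC (ratio M i k M0 iM kM) mulrC.
Qed.

Lemma constr :
  is_MSC Qc (fun M i => p i M) /\ rationalizes p Qc (fun M i => p i M) /\
  (forall M : {set X}, M != finset.set0 -> fully_comparable Qc M /\ reversible Qc (fun M i => p i M) M) /\
  (forall M : {set X}, M != finset.set0 -> forall i j, i \in M -> j \in M -> i != j ->
          0 < Qc M i j /\ Qc M i j / Qc M j i = p j [set: X]%SET / p i [set: X]%SET).
Proof.
split.
  move=> M M0; have [hge [hsum _]] := hp M M0.
  split; first by move=> i j iM jM; apply/ltW/Qc_pos.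
  split; first by move=> i iM; exact: (hge i).1.
  split; first exact: hsum.
  split; first by move=> i iM; split; [exact: Qc_A1|exact: Qc_pos].
  move=> i j iM jM ij.
  have iN : i \in [set i; j] by rewrite !inE eqxx.
  have jN : j \in [set i; j] by rewrite !inE eqxx orbT.
  split; first by move=> _; apply: Qc_pos => //; exact: pair_n0.
  rewrite /Qc (negbTE ij) eq_sym (negbTE ij).
  have h := hiia M M0 i j iM jM.
  transitivity ((p j [set i; j] * p i M) / 4); first by field.
  by rewrite -h; field.
split; first by move=> M M0 i iM; rewrite rho_c.
split.
  move=> M M0; split; first by move=> i j iM jM ij; apply: Qc_pos.
  move=> i j iM jM; rewrite !rho_c //.
  rewrite /Qc; case: (eqVneq i j) => [->|ij]; first by rewrite mulrC.
  by field.
move=> M M0 i j iM jM ij; split; first by apply: Qc_pos.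
have ji : j != i by rewrite eq_sym.
have uT : forall x, 0 < p x [set: X]%SET by move=> x; exact: (hpos _ (setT_n0 x) x (finset.in_setT x)).
rewrite /Qc (negbTE ij) (negbTE ji).
have hi : p i M != 0 by rewrite gt_eqF // hpos.
have ti : p i [set: X]%SET != 0 by rewrite gt_eqF.
transitivity (p j M / p i M); first by field.
apply/eqP; rewrite eqr_div //; apply/eqP.
by rewrite (ratio M i j M0 iM jM) mulrC.
Qed.

End Constr.

End Main.

Theorem theorem3 (R : realType) (X : finType) (p : X -> {set X} -> R)
  (hp : stochastic_choice p) :
  ((exists (Q : {set X} -> X -> X -> R) (nu : {set X} -> X -> R),
      is_MSC Q nu /\ rationalizes p Q nu /\
      (forall M : {set X}, M != finset.set0 -> fully_comparable Q M /\ reversible Q nu M))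
   <-> (positive_scf p /\ IIA p))
  /\
  ((positive_scf p /\ IIA p) <->
   (exists (Q : {set X} -> X -> X -> R) (nu : {set X} -> X -> R),
      is_MSC Q nu /\ rationalizes p Q nu /\
      exists u : X -> R, (forall x, 0 < u x) /\
        forall M : {set X}, M != finset.set0 -> forall i j, i \in M -> j \in M -> i != j ->
          0 < Q M i j /\ Q M i j / Q M j i = u j / u i)).
Proof.
split; split.
- by case=> Q [nu [hM [hr hfr]]]; exact: (@i_to_ii R X p hp Q nu hM hr hfr).
- case=> hpos hiia; have [h1 [h2 [h3 _]]] := @constr R X p hp hpos hiia.
  by exists (@Qc R X p), (fun M i => p i M).
- case=> hpos hiia; have [h1 [h2 [_ h4]]] := @constr R X p hp hpos hiia.
  exists (@Qc R X p), (fun M i => p i M); split => //; split => //.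
  exists (fun x => p x [set: X]%SET); split => //.
  move=> x; apply: (hpos [set: X]%SET); last exact: finset.in_setT.
  by apply/set0Pn; exists x; exact: finset.in_setT.
- case=> Q [nu [hM [hr [u [u0 hu]]]]].
  exact: (@iii_to_ii R X p Q nu u hM hr u0 hu).
Qed.
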